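(* Let $X$ be a set of pointed Kripke models and $\Lambda$ a normal modal logic sound with respect to $X$. Every clean map $\boldsymbol{f}$ on the modal space $X_{\boldsymbol{\mathcal{L}}_{\Lambda}}$ is total and well-defined: for every precondition finite multi-pointed action model $\Sigma\Gamma$ closing, deterministic and exhaustive over $X$, and every $\boldsymbol{x}\in X_{\boldsymbol{\mathcal{L}}_{\Lambda}}$, the class of $x\otimes\Sigma\Gamma$ in $X_{\boldsymbol{\mathcal{L}}_{\Lambda}}$ exists and does not depend on the choice of representative $x\in\boldsymbol{x}$.
   Context: Signature: countable non-empty sets $\Phi$, $\mathcal{I}$; $\mathcal{L}$: $\varphi ::= \top\mid p\mid\neg\varphi\mid\varphi\wedge\varphi\mid\Box_i\varphi$ on pointed Kripke models (countable non-empty state sets, relations $R_i$, atom valuations), standard semantics. $\boldsymbol{\varphi}$: formulas $\Lambda$-provably equivalent to $\varphi$; $X_{\boldsymbol{\mathcal{L}}_{\Lambda}}=\{\boldsymbol{x}:x\in X\}$ with $\boldsymbol{x}=\{y\in X:y\models\varphi\iff x\models\varphi\ \forall\varphi\in\mathcal{L}\}$. A multi-pointed action model is $\Sigma\Gamma=(\llbracket\Sigma\rrbracket,\mathsf{R},pre,post,\Gamma)$: countable non-empty action set, relations $\mathsf{R}_i$ ($i\in\mathcal{I}$), $pre,post:\llbracket\Sigma\rrbracket\to\mathcal{L}$ with each $post(\sigma)$ either $\top$ or a conjunction of literals, $\emptyset\neq\Gamma\subseteq\llbracket\Sigma\rrbracket$. Precondition finite: $\{\boldsymbol{pre(\sigma)}:\sigma\in\llbracket\Sigma\rrbracket\}$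 finite. Exhaustive over $X$: each $x\in X$ satisfies $pre(\sigma)$ for some $\sigma\in\Gamma$. Deterministic over $X$: each $x\in X$ satisfies $pre(\sigma)\wedge pre(\sigma')\to\bot$ for $\sigma\neq\sigma'\in\Gamma$. Product update $Ms\otimes\Sigma\Gamma$: states $\{(s,\sigma):Ms\models pre(\sigma)\}$, $R'_i=\{((s,\sigma),(t,\tau)):(s,t)\in R_i,(\sigma,\tau)\in\mathsf{R}_i\}$, $\llbracket p\rrbracket'=\{(s,\sigma):s\in\llbracket p\rrbracket,post(\sigma)\not\models\neg p\}\cup\{(s,\sigma):post(\sigma)\models p\}$, designated state $(s,\sigma)$ with $\sigma\in\Gamma$, $Ms\models pre(\sigma)$. Closing over $X$: $x\otimes\Sigma\Gamma\in X$ for all $x\in X$. A map $\boldsymbol{f}$ on $X_{\boldsymbol{\mathcal{L}}_{\Lambda}}$ is clean if such a precondition finite $\Sigma\Gamma$, closing, deterministic and exhaustive over $X$, satisfies $\boldsymbol{f}(\boldsymbol{x})=\boldsymbol{y}$ iff $x\otimes\Sigma\Gamma\in\boldsymbol{y}$. *)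

(* Defs.v *)
From Stdlib Require Import List.
Set Implicit Arguments.

Section Logic.
Variables (Phi I : Type).

Inductive form : Type :=
| Top : form
| Atom : Phi -> form
| Neg : form -> form
| And : form -> form -> form
| Box : I -> form -> form.

Definition Bot : form := Neg Top.
Definition Imp (a b : form) : form := Neg (And a (Neg b)).
Definition Iff (a b : form) : form := And (Imp a b) (Imp b a).

Definition countable (T : Type) : Prop := exists f : T -> nat, forall a b, f a = f b -> a = b.

(* Kripke models (the state set is the carrier type; it is non-empty since a
   pointed model has a designated state) *)
Record kmodel : Type := KModel {
  St : Type;
  Rel : I -> St -> St -> Prop;
  Val : Phi -> St -> Prop }.

Record pmodel : Type := PModel { pm : kmodel; pt : St pm }.

Fixpoint sat (M : kmodel) (s : St M) (f : form) : Prop :=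
  match f with
  | Top => True
  | Atom p => Val M p s
  | Neg g => ~ sat M s g
  | And g h => sat M s g /\ sat M s h
  | Box i g => forall t, Rel M i s t -> sat M t g
  end.

Definition psat (x : pmodel) (f : form) : Prop := sat (pm x) (pt x) f.

Definition entails (f g : form) : Prop :=
  forall (M : kmodel) (s : St M), sat M s f -> sat M s g.

Definition modeq (x y : pmodel) : Prop := forall f, psat x f <-> psat y f.
Definition mclass (X : pmodel -> Prop) (x : pmodel) : pmodel -> Prop :=
  fun y => X y /\ modeq x y.

Fixpoint peval (v : form -> Prop) (f : form) : Prop :=
  match f with
  | Top => True
  | Atom p => v (Atom p)
  | Neg g => ~ peval v g
  | And g h => peval v g /\ peval v h
  | Box i g => v (Box i g)
  end.
Definition tautology (f : form) : Prop := forall v, peval v f.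

Fixpoint subst (s : Phi -> form) (f : form) : form :=
  match f with
  | Top => Top
  | Atom p => s p
  | Neg g => Neg (subst s g)
  | And g h => And (subst s g) (subst s h)
  | Box i g => Box i (subst s g)
  end.

Definition normal_logic (L : form -> Prop) : Prop :=
  (forall f, tautology f -> L f) /\
  (forall i f g, L (Imp (Box i (Imp f g)) (Imp (Box i f) (Box i g)))) /\
  (forall f g, L (Imp f g) -> L f -> L g) /\
  (forall i f, L f -> L (Box i f)) /\
  (forall s f, L f -> L (subst s f)).

Definition sound (L : form -> Prop) (X : pmodel -> Prop) : Prop :=
  forall f, L f -> forall x, X x -> psat x f.

Inductive literal : form -> Prop :=
| lit_pos : forall p, literal (Atom p)
| lit_neg : forall p, literal (Neg (Atom p)).

Inductive conj_literals : form -> Prop :=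
| cl_lit : forall f, literal f -> conj_literals f
| cl_and : forall f g, conj_literals f -> conj_literals g -> conj_literals (And f g).

Record amodel : Type := AModel {
  Act : Type;
  ARel : I -> Act -> Act -> Prop;
  pre : Act -> form;
  post : Act -> form;
  Gam : Act -> Prop }.

Definition wf_amodel (A : amodel) : Prop :=
  countable (Act A) /\
  (forall a, post A a = Top \/ conj_literals (post A a)) /\
  (exists a, Gam A a).

Definition pre_finite (L : form -> Prop) (A : amodel) : Prop :=
  exists l : list form, forall a, exists g, In g l /\ L (Iff (pre A a) g).

Definition exhaustive (X : pmodel -> Prop) (A : amodel) : Prop :=
  forall x, X x -> exists a, Gam A a /\ psat x (pre A a).

Definition deterministic (X : pmodel -> Prop) (A : amodel) : Prop :=
  forall x, X x -> forall a b, Gam A a -> Gam A b -> a <> b ->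
    psat x (Imp (And (pre A a) (pre A b)) Bot).

Definition update_model (M : kmodel) (A : amodel) : kmodel :=
  {| St := { p : St M * Act A | sat M (fst p) (pre A (snd p)) };
     Rel := fun i u w =>
       Rel M i (fst (proj1_sig u)) (fst (proj1_sig w)) /\
       ARel A i (snd (proj1_sig u)) (snd (proj1_sig w));
     Val := fun p u =>
       (Val M p (fst (proj1_sig u)) /\
          ~ entails (post A (snd (proj1_sig u))) (Neg (Atom p))) \/
       entails (post A (snd (proj1_sig u))) (Atom p) |}.

Definition updates (x : pmodel) (A : amodel) (y : pmodel) : Prop :=
  exists a (h : sat (pm x) (pt x) (pre A a)),
    Gam A a /\
    y = {| pm := update_model (pm x) A;
           pt := (exist _ (pt x, a) h : St (update_model (pm x) A)) |}.

Definition closing (X : pmodel -> Prop) (A : amodel) : Prop :=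
  forall x, X x -> forall y, updates x A y -> X y.

End Logic.

(* Main.v *)
Require Import Defs.
From Stdlib Require Import List Classical.
Import ListNotations.

Section Aux.
Variables (Phi I : Type).
Variable L : form Phi I -> Prop.
Variable A : amodel Phi I.
Hypothesis hL : normal_logic L.
Hypothesis hpf : pre_finite L A.

Definition Good (M : kmodel Phi I) (u : St M) : Prop := forall f, L f -> sat M u f.

Lemma good_step (M : kmodel Phi I) u i v : Good M u -> Rel M i u v -> Good M v.
Proof.
  intros G R f Lf. destruct hL as (_ & _ & _ & hN & _).
  exact (G _ (hN i f Lf) v R).
Qed.

Lemma sat_imp (M : kmodel Phi I) u a b : sat M u (Imp a b) <-> (sat M u a -> sat M u b).
Proof. simpl. split; intros H; [intros Ha; apply NNPP; intros Hb; apply H; auto | intros [Ha Hb]; auto]. Qed.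

Lemma sat_iff (M : kmodel Phi I) u a b : sat M u (Iff a b) <-> (sat M u a <-> sat M u b).
Proof.
  unfold Iff. change (sat M u (Imp a b) /\ sat M u (Imp b a) <-> (sat M u a <-> sat M u b)).
  rewrite !sat_imp. tauto.
Qed.

Definition Trans (phi : form Phi I) (b : Act A) (psi : form Phi I) : Prop :=
  forall M u (h : sat M u (pre A b)), Good M u ->
    (sat (update_model M A) (exist _ (u, b) h : St (update_model M A)) phi <-> sat M u psi).

Fixpoint pw {T} (l : list T) : list (list T) :=
  match l with
  | [] => [[]]
  | x :: xs => pw xs ++ map (cons x) (pw xs)
  end.

Lemma pw_sel2 {T} (l : list T) (R : T -> Prop) :
  exists S, In S (pw l) /\ forall z, In z S <-> (In z l /\ R z).
Proof.
  induction l as [|x xs IH]; simpl.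
  - exists []. split; auto. intros z; simpl; tauto.
  - destruct IH as [S [HS HSz]].
    destruct (classic (R x)) as [Rx|nRx].
    + exists (x :: S). split. apply in_or_app; right; apply in_map; auto.
      intros z; simpl. rewrite HSz. split.
      * intros [<-|[]]; auto.
      * intros [[<-|Hz] Rz]; auto.
    + exists S. split. apply in_or_app; auto.
      intros z. rewrite HSz. simpl. split.
      * intros [Hz Rz]; auto.
      * intros [[<-|Hz] Rz]; [contradiction|auto].
Qed.

Definition conjBox (i : I) (S : list (form Phi I * form Phi I)) : form Phi I :=
  fold_right (fun z acc => And (Box i (Imp (fst z) (snd z))) acc) (Top Phi I) S.

Lemma conjBox_sat (M : kmodel Phi I) u i S :
  sat M u (conjBox i S) <-> forall g psi, In (g, psi) S -> sat M u (Box i (Imp g psi)).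
Proof.
  induction S as [|[g psi] S IH].
  - simpl. split; intros; [contradiction|exact Logic.I].
  - change (sat M u (Box i (Imp g psi)) /\ sat M u (conjBox i S) <->
      (forall g0 psi0, In (g0, psi0) ((g, psi) :: S) -> sat M u (Box i (Imp g0 psi0)))).
    rewrite IH. split.
    + intros [H1 H2] g' psi' [E|Hin]; [inversion E; subst; auto | auto].
    + intros H. split. apply (H g psi); left; auto. intros; apply H; right; auto.
Qed.

Lemma trans_ex (phi : form Phi I) :
  exists Ps : list (form Phi I), forall b, exists psi, In psi Ps /\ Trans phi b psi.
Proof.
  induction phi as [|p|phi IH|phi1 IH1 phi2 IH2|i phi IH].
  - exists [Top Phi I]. intros b. exists (Top Phi I). split; [simpl; auto|].
    intros M u h G. simpl. tauto.
  - exists [Top Phi I; Bot Phi I; Atom I p]. intros b.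
    destruct (classic (entails (post A b) (Atom I p))) as [E2|nE2].
    + exists (Top Phi I). split; [simpl; auto|]. intros M u h G; simpl. tauto.
    + destruct (classic (entails (post A b) (Neg (Atom I p)))) as [E1|nE1].
      * exists (Bot Phi I). split; [simpl; auto|]. intros M u h G; simpl. tauto.
      * exists (Atom I p). split; [simpl; auto|]. intros M u h G; simpl. tauto.
  - destruct IH as [Ps HP]. exists (map (@Neg Phi I) Ps). intros b.
    destruct (HP b) as [psi [Hin Ht]]. exists (Neg psi). split. apply in_map; auto.
    intros M u h G. simpl. rewrite (Ht M u h G). tauto.
  - destruct IH1 as [P1 H1]. destruct IH2 as [P2 H2].
    exists (map (fun z => And (fst z) (snd z)) (list_prod P1 P2)). intros b.
    destruct (H1 b) as [p1 [i1 t1]]. destruct (H2 b) as [p2 [i2 t2]].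
    exists (And p1 p2). split.
    + apply (in_map (fun z => And (fst z) (snd z)) _ (p1, p2)). apply in_prod; auto.
    + intros M u h G. simpl. rewrite (t1 M u h G), (t2 M u h G). tauto.
  - destruct IH as [Ps HP]. destruct hpf as [l Hl].
    set (P := list_prod l Ps).
    exists (map (conjBox i) (pw P)). intros b.
    destruct (pw_sel2 P (fun z => exists c, ARel A i b c /\ L (Iff (pre A c) (fst z)) /\ Trans phi c (snd z)))
      as [S [HS HSz]].
    exists (conjBox i S). split. apply in_map; auto.
    intros M u h G. rewrite conjBox_sat. split.
    + intros H g psi Hin v Ruv. apply sat_imp. intros Hg.
      destruct (proj1 (HSz _) Hin) as [_ [c [Abc [Lc Tc]]]]. simpl in Lc, Tc.
      assert (Gv : Good M v) by (eapply good_step; eauto).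
      assert (hv : sat M v (pre A c)) by (apply (proj1 (sat_iff _ _ _ _) (Gv _ Lc)); auto).
      apply (proj1 (Tc M v hv Gv)).
      apply (H (exist _ (v, c) hv)). simpl. auto.
    + intros H [[v c] hv] [Ruv Abc]. simpl in Ruv, Abc, hv.
      assert (Gv : Good M v) by (eapply good_step; eauto).
      destruct (Hl c) as [g [ig Lg]]. destruct (HP c) as [psi [ip Tp]].
      assert (InS : In (g, psi) S).
      { apply HSz. split. apply in_prod; auto. exists c. simpl. auto. }
      apply (Tp M v hv Gv).
      assert (Hi : sat M v (Imp g psi)) by exact (H g psi InS v Ruv). apply (proj1 (sat_imp M v g psi) Hi).
      apply (proj1 (sat_iff _ _ _ _) (Gv _ Lg)). exact hv.
Qed.

End Aux.

Theorem proposition32 (Phi I : Type)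
  (hPhi : countable Phi) (nePhi : inhabited Phi)
  (hI : countable I) (neI : inhabited I)
  (X : pmodel Phi I -> Prop)
  (hXc : forall x, X x -> countable (St (pm x)))
  (L : form Phi I -> Prop) (hL : normal_logic L) (hsound : sound L X)
  (A : amodel Phi I) (hA : wf_amodel A) (hpf : pre_finite L A)
  (hcl : closing X A) (hdet : deterministic X A) (hex : exhaustive X A) :
  forall x, X x ->
    (exists y, updates x A y /\ X y) /\
    (forall x', mclass X x x' ->
       forall y y', updates x A y -> updates x' A y' -> mclass X y y').
Proof.
  intros x Hx. split.
  - destruct (hex x Hx) as [a [Ga h]].
    assert (U : updates x A {| pm := update_model (pm x) A;
           pt := (exist _ (pt x, a) h : St (update_model (pm x) A)) |}).
    { exists a, h. split; auto. }
    eexists; split; [exact U|]. exact (hcl x Hx _ U).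
  - intros x' [Hx' Heq] y y' Uy Uy'.
    split. exact (hcl x' Hx' _ Uy').
    destruct Uy as [a [h [Ga ->]]]. destruct Uy' as [a' [h' [Ga' ->]]].
    destruct (classic (a = a')) as [<-|ne].
    2:{ exfalso. pose proof (hdet x Hx a a' Ga Ga' ne) as D.
        apply (proj2 (Heq (pre A a'))) in h'.
        unfold psat in D. simpl in D. apply D. split; [split; auto|]. tauto. }
    intros f. destruct (@trans_ex Phi I L A hL hpf f) as [Ps HP].
    destruct (HP a) as [psi [_ Tp]].
    unfold psat; simpl.
    rewrite (Tp (pm x) (pt x) h (fun g Lg => hsound g Lg x Hx)).
    rewrite (Tp (pm x') (pt x') h' (fun g Lg => hsound g Lg x' Hx')).
    apply Heq.
Qed.
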